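(* For every $N\ge3$, the given generators of $I_N$ form a regular sequence in $\mathbb C[k_1,\dots,k_N]$ and the given generators of $I'_N$ form a regular sequence in $\mathbb C[v_1,w_1,\dots,v_N,w_N]$; so the quotients are complete intersections.
   Context: Write $k_i=\begin{pmatrix}a_i&b_i\\c_i&d_i\end{pmatrix}$ ($4N$ variables), $Q_i=a_id_i-b_ic_i$, and let $v_i,w_i$ be $2$-component column vectors of variables ($4N$ variables). $I_N\subset\mathbb C[k_1,\dots,k_N]$ is generated by the four entries of $k_1+\dots+k_N$ and $Q_1,\dots,Q_N$; $I'_N\subset\mathbb C[v,w]$ is generated by the four entries of $v_1w_1^T+\dots+v_Nw_N^T$. *)

(* Defs.v *)
From HB Require Import structures.
From mathcomp Require Import all_boot all_order all_algebra.
From mathcomp Require Import reals.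
From mathcomp Require Import complex.
From mathcomp Require Import mpoly.
Set Implicit Arguments. Unset Strict Implicit. Unset Printing Implicit Defensive.
Import GRing.Theory.
Local Open Scope ring_scope.

Definition in_ideal_gen (n : nat) (K : comRingType) (s : seq {mpoly K[n]})
    (p : {mpoly K[n]}) : Prop :=
  exists c : seq {mpoly K[n]}, p = \sum_(i < size s) c`_i * s`_i.

Definition regular_seq (n : nat) (K : comRingType) (s : seq {mpoly K[n]}) : Prop :=
  ~ in_ideal_gen s 1 /\
  forall i : nat, (i < size s)%N -> forall g : {mpoly K[n]},
    in_ideal_gen (take i s) (g * s`_i) -> in_ideal_gen (take i s) g.

Definition var4 (K : comRingType) (N j : nat) : {mpoly K[4 * N]} :=
  match (4 * N)%N as m return {mpoly K[m]} with
  | 0 => 0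
  | m.+1 => 'X_(@inord m j)
  end.

(* Variables of C[k_1..k_N]: k_i = [[a_i,b_i],[c_i,d_i]] with (0-based i)
   a_i = X_(4i), b_i = X_(4i+1), c_i = X_(4i+2), d_i = X_(4i+3). *)
Definition ka K N i := var4 K N (4 * i).
Definition kb K N i := var4 K N (4 * i + 1).
Definition kc K N i := var4 K N (4 * i + 2).
Definition kd K N i := var4 K N (4 * i + 3).

(* Generators of I_N: the four entries (a,b,c,d order) of k_1+...+k_N,
   then Q_1, ..., Q_N with Q_i = a_i d_i - b_i c_i. *)
Definition IN_gens (K : comRingType) (N : nat) : seq {mpoly K[4 * N]} :=
  [:: \sum_(i < N) ka K N i; \sum_(i < N) kb K N i;
      \sum_(i < N) kc K N i; \sum_(i < N) kd K N i]
  ++ [seq ka K N i * kd K N i - kb K N i * kc K N i | i <- iota 0 N].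

(* Variables of C[v,w]: v_i = (X_(4i), X_(4i+1))^T, w_i = (X_(4i+2), X_(4i+3))^T. *)
Definition v1 K N i := var4 K N (4 * i).
Definition v2 K N i := var4 K N (4 * i + 1).
Definition w1 K N i := var4 K N (4 * i + 2).
Definition w2 K N i := var4 K N (4 * i + 3).

(* Generators of I'_N: the four entries ((1,1),(1,2),(2,1),(2,2)) of
   sum_i v_i w_i^T. *)
Definition IpN_gens (K : comRingType) (N : nat) : seq {mpoly K[4 * N]} :=
  [:: \sum_(i < N) v1 K N i * w1 K N i; \sum_(i < N) v1 K N i * w2 K N i;
      \sum_(i < N) v2 K N i * w1 K N i; \sum_(i < N) v2 K N i * w2 K N i].

(* Main.v *)
Require Import Defs.
From HB Require Import structures.
From mathcomp Require Import all_boot all_order all_algebra.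
From mathcomp Require Import reals.
From mathcomp Require Import complex.
From mathcomp Require Import mpoly.
From mathcomp Require Import zify.
Set Implicit Arguments. Unset Strict Implicit. Unset Printing Implicit Defensive.
Import Order.TTheory GRing.Theory.
Local Open Scope ring_scope.
Section Core.
Variables (K : fieldType) (n : nat).
Implicit Types (p q : {mpoly K[n]}).

Definition IdealN (f : nat -> {mpoly K[n]}) (r : nat) p :=
  exists c : nat -> {mpoly K[n]}, p = \sum_(k < r) c k * f k.

Lemma IdealN0 f r : IdealN f r 0.
Proof. by exists (fun _ => 0); rewrite big1 // => k _; rewrite mul0r. Qed.

Lemma IdealN_add f r p a k : (k < r)%N -> IdealN f r p -> IdealN f r (p + a * f k).
Proof.
move=> kr [c ->]; exists (fun l : nat => c l + (l == k)%:R * a).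
rewrite -[RHS]addr0 /=.
have -> : \sum_(l < r) (c l + (nat_of_ord l == k)%:R * a) * f l =
  \sum_(l < r) c l * f l + \sum_(l < r) ((nat_of_ord l == k)%:R * a) * f l.
  by rewrite -big_split; apply: eq_bigr => l _; rewrite mulrDl.
rewrite addr0; congr (_ + _).
rewrite (bigD1 (Ordinal kr)) //= eqxx mul1r big1 ?addr0 // => l /negbTE.
by rewrite -val_eqE /= => ->; rewrite mul0r mul0r.
Qed.

Lemma lead_sub p q : p != 0 -> mlead q = mlead p -> mleadc q = mleadc p ->
  p - q = 0 \/ (mlead (p - q) < mlead p)%O.
Proof.
move=> p0 eml emc; have [->|nz] := eqVneq (p - q) 0; first by left.
right; have le := mleadB_le p q; rewrite eml joinxx in le.
rewrite lt_neqAle le andbT; apply/eqP => E.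
move: nz; rewrite -mleadc_eq0 E mcoeffB -eml emc eml subrr eqxx //.
Qed.


Lemma core (f : nat -> {mpoly K[n]}) (r : nat) :
  (forall k : 'I_r.+1, f k != 0) ->
  (forall i j : 'I_r.+1, i != j -> forall v : 'I_n,
      (mlead (f i) v == 0%N) || (mlead (f j) v == 0%N)) ->
  forall g : nat -> {mpoly K[n]}, \sum_(k < r.+1) g k * f k = 0 -> IdealN f r (g r).
Proof.
move=> fnz cop.
pose Lm (g : nat -> {mpoly K[n]}) (k : 'I_r.+1) := (mlead (g k) + mlead (f k))%MM.
suff H: forall (M : 'X_{1..n}) (g : nat -> {mpoly K[n]}), \sum_(k < r.+1) g k * f k = 0 ->
    (forall k : 'I_r.+1, g k != 0 -> (Lm g k <= M)%O) -> IdealN f r (g r).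
  move=> g sg; apply: (H (\join_(k < r.+1 | g k != 0) Lm g k)%O g sg).
  by move=> k gk; apply: (joins_sup (P := fun k : 'I_r.+1 => g k != 0)).
elim/(@ltmwf n) => M IH.
pose T (g : nat -> {mpoly K[n]}) := [set k : 'I_r.+1 | (g k != 0) && (Lm g k == M)].
have empty_case : forall g : nat -> {mpoly K[n]}, \sum_(k < r.+1) g k * f k = 0 ->
    (forall k : 'I_r.+1, g k != 0 -> (Lm g k <= M)%O) -> T g = set0 -> IdealN f r (g r).
  move=> g sg bnd T0.
  have nT : forall k : 'I_r.+1, g k != 0 -> (Lm g k < M)%O.
    move=> k gk; rewrite lt_neqAle bnd // andbT; apply/negP => /eqP E.
    have : k \in T g by rewrite inE gk E eqxx.
    by rewrite T0 inE.
  have [allz|] := boolP [forall k : 'I_r.+1, g k == 0].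
    have -> : g r = 0 by apply/eqP: (forallP allz ord_max).
    exact: IdealN0.
  rewrite negb_forall => /existsP [k0 gk0].
  apply: (IH (\join_(k < r.+1 | g k != 0) Lm g k)%O) => //; last first.
    by move=> k gk; apply: (joins_sup (P := fun k : 'I_r.+1 => g k != 0)).
  apply: (big_ind (fun x => (x < M)%O)).
  - exact: (le_lt_trans (le0x _) (nT k0 gk0)).
  - by move=> x y xM yM; rewrite ltUx xM yM.
  - exact: nT.
move=> g; move: {2}#|T g| (leqnn #|T g|) => c.
elim: c g => [|c IHc] g Tc sg bnd.
  by apply: empty_case => //; apply/eqP; rewrite -cards_eq0 -leqn0.
have [T0|[i iT]] := set_0Vmem (T g); first exact: empty_case.
move: (iT); rewrite inE => /andP [gi /eqP Li].
have [j /andP [jT ji]] : exists j, (j \in T g) && (j != i).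
  case: (boolP [exists j, (j \in T g) && (j != i)]) => [/existsP//|none].
  exfalso.
  have coef : (\sum_(k < r.+1) g k * f k)@_M = mleadc (g i) * mleadc (f i).
    rewrite raddf_sum (bigD1 i) //= -Li mleadcM big1 ?addr0 // => k ki.
    have [->|gk] := eqVneq (g k) 0; first by rewrite mul0r mcoeff0.
    apply: mcoeff_gt_mlead; rewrite mleadM ?fnz // Li.
    rewrite lt_neqAle bnd // andbT; apply/negP => /eqP E.
    move/existsP: none; apply; exists k; rewrite ki andbT inE gk /=.
    by apply/eqP.
  move: coef; rewrite sg mcoeff0 => /esym /eqP.
  by rewrite mulf_eq0 !mleadc_eq0 (negbTE gi) (negbTE (fnz i)).
move: (jT); rewrite inE => /andP [gj /eqP Lj].
have ij : i != j by rewrite eq_sym.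
have le_fj : (mlead (f j) <= mlead (g i))%MM.
  apply/mnm_lepP => v.
  have E : (mlead (g i) + mlead (f i))%MM v = (mlead (g j) + mlead (f j))%MM v.
    by move: Li Lj; rewrite /Lm => -> ->.
  rewrite !mnmDE in E.
  case/orP: (cop i j ij v) => /eqP H0.
    by rewrite H0 addn0 in E; rewrite E leq_addl.
  by rewrite H0.
set mu := (mlead (g i) - mlead (f j))%MM.
set cc := mleadc (g i) / mleadc (f j).
set h := cc *: 'X_[mu].
have cc0 : cc != 0 by rewrite /cc mulf_neq0 // ?invr_eq0 mleadc_eq0 ?fnz.
have ch0 : h@_mu = cc by rewrite mcoeffZ mcoeffX eqxx mulr1.
have h0 : h != 0 by apply/negP => /eqP h0; move: ch0; rewrite h0 mcoeff0 => /esym/eqP; rewrite (negbTE cc0).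
have mh : mlead h = mu by rewrite mleadZ // mleadXm.
have mhfj : mlead (h * f j) = mlead (g i) by rewrite mleadM ?fnz // mh submK.
have chfj : mleadc (h * f j) = mleadc (g i).
  rewrite mhfj -{1}(submK le_fj) -/mu -mh mleadcM mh ch0 /cc divfK //.
  by rewrite mleadc_eq0 fnz.
have mhfi : mlead (h * f i) = mlead (g j).
  rewrite mleadM ?fnz // mh; apply/eqP; rewrite -(eqm_add2l (mlead (f j))); apply/eqP.
  rewrite addmA [(mlead (f j) + mu)%MM]addmC submK // [RHS]addmC.
  by move: Li Lj; rewrite /Lm => -> ->.
pose g' (k : nat) := if k == i :> nat then g i - h * f j
                     else if k == j :> nat then g j + h * f i else g k.
have g'i : g' i = g i - h * f j by rewrite /g' eqxx.
have g'j : g' j = g j + h * f i.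
  by rewrite /g' eqxx; case: eqP => // /val_inj E; move: ji; rewrite E eqxx.
have g'k : forall k : 'I_r.+1, k != i -> k != j -> g' k = g k.
  by move=> k ki kj; rewrite /g' (negbTE (ki : (k : nat) != i)) (negbTE (kj : (k : nat) != j)).
have Li' : g' i != 0 -> (Lm g' i < M)%O.
  move=> nz; rewrite /Lm g'i -Li /Lm ltmc_add2l.
  case: (lead_sub gi mhfj chfj) => // E; by move: nz; rewrite g'i E eqxx.
have Lj' : g' j != 0 -> (Lm g' j <= M)%O.
  move=> nz; rewrite /Lm g'j -Lj /Lm lemc_add2l.
  by have := mleadD_le (g j) (h * f i); rewrite mhfi joinxx.
have sub : T g' \proper T g.
  apply/properP; split.
    apply/subsetP => k; rewrite !inE => /andP [gk /eqP Lk].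
    have [ki|ki] := eqVneq k i.
      by subst k; move: (Li' gk); rewrite Lk ltxx.
    have [kj|kj] := eqVneq k j; first by subst k; rewrite gj Lj eqxx.
    by move: gk Lk; rewrite /Lm g'k // => -> ->; rewrite eqxx.
  exists i => //; rewrite inE negb_and negbK.
  apply/orP; case: (boolP (g' i == 0)) => [z|nz]; [by left|right].
  by rewrite lt_eqF ?Li'.
have Ir : IdealN f r (g' r).
  apply: IHc.
  - by rewrite -ltnS; apply: leq_trans Tc; apply: proper_card.
  - rewrite (eq_bigr (fun k : 'I_r.+1 => g k * f k + (k == i)%:R * (- (h * f j) * f i)
                          + (k == j)%:R * (h * f i * f j))).
      rewrite !big_split /= sg add0r (bigD1 i) //= eqxx mul1r big1 ?addr0; last first.
        by move=> k /negbTE ->; rewrite mul0r.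
      rewrite (bigD1 j) //= eqxx mul1r big1 ?addr0; last first.
        by move=> k /negbTE ->; rewrite mul0r.
      by rewrite mulNr -!mulrA [X in _ + h * X]mulrC addNr.
    move=> k _.
    have [->|ki] := eqVneq k i.
      by rewrite g'i (negbTE ij) mul0r addr0 mulrBl mul1r mulNr.
    have [->|kj] := eqVneq k j.
      by rewrite g'j mul1r mul0r addr0 mulrDl.
    by rewrite g'k // !mul0r !addr0.
  - move=> k nz.
    have [ki|ki] := eqVneq k i; first by subst k; apply/ltW/Li'.
    have [kj|kj] := eqVneq k j; first by subst k; apply: Lj'.
    by move: nz; rewrite /Lm g'k // => nz; apply: bnd.
have [ri|ri] := boolP ((r : nat) == i).
  have jr : (j < r)%N.
    rewrite ltn_neqAle -ltnS ltn_ord andbT; apply: contraNneq ji => E.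
    by change ((j:nat) == i); rewrite E.
  have -> : g r = g' r + h * f j by rewrite /g' ri subrK; exact: (congr1 g (eqP ri)).
  exact: IdealN_add.
have [rj|rj] := boolP ((r : nat) == j).
  have ir : (i < r)%N.
    rewrite ltn_neqAle -ltnS ltn_ord andbT; apply: contraNneq ji => E.
    by change ((j:nat) == i); rewrite eq_sym E.
  have -> : g r = g' r + (- h) * f i by rewrite /g' (negbTE ri) rj mulNr addrK; exact: (congr1 g (eqP rj)).
  exact: IdealN_add.
by rewrite /g' (negbTE ri) (negbTE rj) in Ir.
Qed.

End Core.
Section T.
Variables (K : fieldType) (n m : nat).
Lemma comp_id (lq : n.-tuple {mpoly K[m]}) (le : m.-tuple {mpoly K[n]}) :
  (forall i : 'I_n, (tnth lq i) \mPo le = 'X_i) ->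
  forall p : {mpoly K[n]}, (p \mPo lq) \mPo le = p.
Proof.
move=> H p; rewrite [RHS]mpolyE (comp_mpolyE p lq) raddf_sum; apply: eq_bigr => mm _ /=.
rewrite comp_mpolyZ rmorph_prod mpolyXE_id; congr (_ *: _).
by apply: eq_bigr => i _ /=; rewrite rmorphXn /=; congr (_ ^+ _); exact: H.
Qed.
End T.

Section Reg.
Variables (K : fieldType) (n m : nat).

Lemma regular_from (s : seq {mpoly K[n]}) (lq : n.-tuple {mpoly K[m]})
    (le : m.-tuple {mpoly K[n]}) :
  (forall i : 'I_n, (tnth lq i) \mPo le = 'X_i) ->
  (forall k, (k < size s)%N -> (s`_k \mPo lq) != 0) ->
  (forall k1 k2, (k1 < size s)%N -> (k2 < size s)%N -> k1 != k2 -> forall v : 'I_m,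
     (mlead (s`_k1 \mPo lq) v == 0%N) || (mlead (s`_k2 \mPo lq) v == 0%N)) ->
  ~ in_ideal_gen s 1 -> regular_seq s.
Proof.
move=> H nz cop prop; split => // i ilt g [c E].
have szt : size (take i s) = i by rewrite size_take ilt.
have tk : forall (F : nat -> {mpoly K[n]}),
    \sum_(k < size (take i s)) F k * (take i s)`_k = \sum_(k < i) F k * s`_k.
  move=> F; rewrite -(big_mkord xpredT (fun k => F k * (take i s)`_k)) szt big_mkord.
  by apply: eq_bigr => k _; rewrite nth_take.
have E' : g * s`_i = \sum_(k < i) c`_k * s`_k by rewrite E tk.
pose f k := s`_k \mPo lq.
pose G k := if k == i then g \mPo lq else - (c`_k \mPo lq).
have sG : \sum_(k < i.+1) G k * f k = 0.
  rewrite big_ord_recr /= /G eqxx.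
  rewrite (eq_bigr (fun k : 'I_i => - ((c`_k * s`_k) \mPo lq))); last first.
    by move=> k _; rewrite (ltn_eqF (ltn_ord k)) rmorphM /= mulNr.
  by rewrite sumrN -rmorph_sum /f -rmorphM -E' addNr.
have fnz : forall k : 'I_i.+1, f k != 0.
  by move=> k; apply: nz; apply: leq_ltn_trans ilt; rewrite -ltnS.
have fcop : forall k1 k2 : 'I_i.+1, k1 != k2 -> forall v : 'I_m,
    (mlead (f k1) v == 0%N) || (mlead (f k2) v == 0%N).
  move=> k1 k2 k12 v; apply: cop => //; apply: leq_ltn_trans ilt; rewrite -ltnS //.
have [d Ed] := core fnz fcop sG.
exists (mkseq (fun k => d k \mPo le) i).
rewrite tk -(comp_id H g); move: Ed; rewrite /G eqxx => ->.
rewrite rmorph_sum; apply: eq_bigr => k _.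
by rewrite rmorphM /= comp_id // nth_mkseq.
Qed.
End Reg.
Lemma split_l m k (i : 'I_m) : split (lshift k i) = inl i.
Proof. exact: (unsplitK (inl _ i)). Qed.
Lemma split_r m k (i : 'I_k) : split (rshift m i) = inr i.
Proof. exact: (unsplitK (inr _ i)). Qed.

Section Lead.
Variables (K : fieldType) (m : nat).

Lemma lead_top (c : K) (M : 'X_{1..m}) (q : {mpoly K[m]}) :
  c != 0 -> (msize q <= mdeg M)%N ->
  mlead (c *: 'X_[M] + q) = M /\ c *: 'X_[M] + q != 0.
Proof.
move=> c0 sq.
have qM : q@_M = 0.
  by apply: memN_msupp_eq0; apply: msize_mdeg_ge.
split; last first.
  apply/negP => /eqP E; move: (congr1 (mcoeff M) E).
  by rewrite mcoeffD mcoeffZ mcoeffX eqxx mulr1 qM addr0 mcoeff0; apply/eqP.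
have [->|qn0] := eqVneq q 0; first by rewrite addr0 mleadZ // mleadXm.
have mZ : mlead (c *: 'X_[M]) = M by rewrite mleadZ // mleadXm.
rewrite mleadDl mZ //; apply: lt_mdeg_ltmc.
by rewrite -ltnS mlead_deg // ltnS.
Qed.

Lemma lead_sumX (I : finType) (M : I -> 'X_{1..m}) (c : I -> K) (i0 : I) :
  c i0 != 0 -> (forall i, i != i0 -> (mdeg (M i) < mdeg (M i0))%N) ->
  mlead (\sum_i c i *: 'X_[M i]) = M i0 /\ \sum_i c i *: 'X_[M i] != 0.
Proof.
move=> c0 lt; rewrite (bigD1 i0) //=; apply: lead_top => //.
apply: leq_trans (msize_sum _ _ _) _.
apply/bigmax_leqP => i /lt; rewrite -ltnS => h.
by apply: leq_trans (msizeZ_le _ _) _; rewrite msizeX.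
Qed.

End Lead.

Section Psi.
Variables (K : fieldType) (n : nat) (W : nat -> nat).

Definition lqW : n.-tuple {mpoly K[n + n]} :=
  [tuple 'X_(lshift n i) * 'X_(rshift n i) ^+ W i | i < n].
Definition leW : (n + n).-tuple {mpoly K[n]} :=
  [tuple (match split j with inl i => 'X_i | inr _ => 1 end) | j < n + n].
Definition mpsi (j : nat) : 'X_{1..n+n} :=
  [multinom (match split v with inl a => nat_of_bool (a == j :> nat)
             | inr a => ((a == j :> nat) * W a)%N end) | v < n + n].
Definition idx (v : 'I_(n+n)) : nat :=
  match split v with inl a => nat_of_ord a | inr a => nat_of_ord a end.

Lemma lqle (i : 'I_n) : tnth lqW i \mPo leW = 'X_i.
Proof.
rewrite tnth_mktuple rmorphM rmorphXn /= !comp_mpolyXU -!tnth_nth !tnth_mktuple.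
by rewrite split_l split_r expr1n mulr1.
Qed.

Lemma psiX (j : 'I_n) : 'X_j \mPo lqW = 'X_[mpsi j].
Proof.
rewrite comp_mpolyXU -tnth_nth tnth_mktuple mpolyXn -mpolyXD; congr mpolyX.
apply/mnmP => v; rewrite mnmDE mulmnE !mnm1E mnmE -(splitK v).
case: (split v) => a /=; rewrite ?split_l ?split_r.
  by rewrite eq_lshift eq_rlshift mul0n addn0 eq_sym.
rewrite eq_lrshift eq_rshift add0n -val_eqE /= eq_sym.
case: eqP => [E|_]; last by rewrite !mul0n.
by rewrite E.
Qed.

Lemma mpsi_supp (j : nat) v : mpsi j v != 0%N -> idx v = j.
Proof.
rewrite mnmE /idx; case: (split v) => a /=; first by case E: ((a : nat) == j) => // _; apply/eqP.
case E: ((a : nat) == j) => /=; first by move=> _; apply/eqP.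
by move=> F; exfalso; move: F.
Qed.

Lemma mdeg_mpsi (j : nat) : (j < n)%N -> mdeg (mpsi j) = (W j).+1.
Proof.
move=> jn.
have s1 : (\sum_(a < n) mpsi j (lshift n a) = 1)%N.
  rewrite (bigD1 (Ordinal jn)) //= mnmE split_l /= eqxx big1 // => a.
  by rewrite mnmE split_l -val_eqE /= => /negbTE ->.
have s2 : (\sum_(a < n) mpsi j (rshift n a) = W j)%N.
  rewrite (bigD1 (Ordinal jn)) //= mnmE split_r /= eqxx mul1n big1 ?addn0 // => a.
  by rewrite mnmE split_r -val_eqE /= => /negbTE ->.
by rewrite mdegE big_split_ord /= s1 s2.
Qed.
Lemma sum_mpsi_supp (S : seq nat) v :
  (\big[+%MM/0%MM]_(x <- S) mpsi x) v != 0%N -> idx v \in S.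
Proof.
elim: S => [|x S IH]; first by rewrite big_nil mnm0E.
rewrite big_cons mnmDE inE; case: (boolP (mpsi x v == 0%N)) => [/eqP ->|h _].
  by rewrite add0n => /IH ->; rewrite orbT.
by rewrite (mpsi_supp h) eqxx.
Qed.

Lemma cop_from (S1 S2 : seq nat) v : ~~ has (mem S2) S1 ->
  ((\big[+%MM/0%MM]_(x <- S1) mpsi x) v == 0%N) ||
  ((\big[+%MM/0%MM]_(x <- S2) mpsi x) v == 0%N).
Proof.
move=> dis; apply/negPn/negP => /norP [/sum_mpsi_supp h1 /sum_mpsi_supp h2].
by move/hasP: dis; apply; exists (idx v).
Qed.

End Psi.

Section Conc.
Variables (K : fieldType) (N : nat).
Local Notation n := (4 * N)%N.

Lemma var4E j (h : (j < n)%N) : var4 K N j = 'X_(Ordinal h).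
Proof.
rewrite /var4; move: (4 * N)%N h => m h.
case: m h => [//|m] h.
by have -> : inord j = Ordinal h by apply: val_inj; rewrite /= inordK.
Qed.

Lemma lt4 i t : (i < N)%N -> (t < 4)%N -> (4 * i + t < n)%N.
Proof. move=> *; lia. Qed.

Definition Wt (wt : nat -> nat -> nat) (j : nat) := wt (j %/ 4)%N (j %% 4)%N.

Variable wt : nat -> nat -> nat.
Local Notation psi p := (p \mPo lqW K n (Wt wt)).
Local Notation mps := (mpsi n (Wt wt)).

Lemma Wt_idx i t : (t < 4)%N -> Wt wt (4 * i + t) = wt i t.
Proof.
move=> ht; rewrite /Wt mulnC divnMDl // modnMDl divn_small // addn0.
by rewrite modn_small.
Qed.

Lemma psi_var j (h : (j < n)%N) : psi (var4 K N j) = 'X_[mps j].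
Proof. by rewrite (var4E h) psiX. Qed.

Lemma mdeg_mps i t : (i < N)%N -> (t < 4)%N -> mdeg (mps (4 * i + t)) = (wt i t).+1.
Proof. by move=> hi ht; rewrite mdeg_mpsi ?lt4 // Wt_idx. Qed.

Lemma lin_lead t (ht : (t < 4)%N) (i0 : 'I_N) :
  (forall i : 'I_N, i != i0 -> (wt i t < wt i0 t)%N) ->
  mlead (psi (\sum_(i < N) var4 K N (4 * i + t))) = mps (4 * i0 + t) /\
  psi (\sum_(i < N) var4 K N (4 * i + t)) != 0.
Proof.
move=> H.
have -> : psi (\sum_(i < N) var4 K N (4 * i + t)) =
          \sum_(i < N) 1 *: 'X_[mps (4 * i + t)].
  rewrite raddf_sum; apply: eq_bigr => i _ /=.
  by rewrite scale1r (psi_var (lt4 (ltn_ord i) ht)).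
apply: (lead_sumX (M := fun i : 'I_N => mps (4 * i + t))); first exact: oner_neq0.
by move=> i /H; rewrite !mdeg_mps.
Qed.

Lemma quad_lead t1 t2 (h1 : (t1 < 4)%N) (h2 : (t2 < 4)%N) (i0 : 'I_N) :
  (forall i : 'I_N, i != i0 -> (wt i t1 + wt i t2 < wt i0 t1 + wt i0 t2)%N) ->
  mlead (psi (\sum_(i < N) var4 K N (4 * i + t1) * var4 K N (4 * i + t2))) =
    (mps (4 * i0 + t1) + mps (4 * i0 + t2))%MM /\
  psi (\sum_(i < N) var4 K N (4 * i + t1) * var4 K N (4 * i + t2)) != 0.
Proof.
move=> H.
have -> : psi (\sum_(i < N) var4 K N (4 * i + t1) * var4 K N (4 * i + t2)) =
          \sum_(i < N) 1 *: 'X_[mps (4 * i + t1) + mps (4 * i + t2)].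
  rewrite raddf_sum; apply: eq_bigr => i _ /=.
  by rewrite scale1r rmorphM /= (psi_var (lt4 (ltn_ord i) h1)) (psi_var (lt4 (ltn_ord i) h2)) mpolyXD.
apply: (lead_sumX (M := fun i : 'I_N => (mps (4 * i + t1) + mps (4 * i + t2))%MM)).
  exact: oner_neq0.
by move=> i /H; rewrite !mdegD !mdeg_mps // !addSn !addnS !ltnS.
Qed.


Lemma Q_lead i (hi : (i < N)%N) :
  let Q := var4 K N (4 * i) * var4 K N (4 * i+3) - var4 K N (4 * i+1) * var4 K N (4 * i+2) in
  let A := (mps (4 * i) + mps (4 * i+3))%MM in
  let B := (mps (4 * i+1) + mps (4 * i+2))%MM in
  ((wt i 1 + wt i 2 < wt i 0 + wt i 3)%N -> mlead (psi Q) = A /\ psi Q != 0) /\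
  ((wt i 0 + wt i 3 < wt i 1 + wt i 2)%N -> mlead (psi Q) = B /\ psi Q != 0).
Proof.
move=> Q A B.
have h0 : (4 * i < n)%N by have := lt4 hi (isT : (0 < 4)%N); rewrite addn0.
have m0 : mdeg (mps (4 * i)) = (wt i 0).+1.
  by have := mdeg_mps hi (isT : (0 < 4)%N); rewrite addn0.
have E : psi Q = 'X_[A] - 'X_[B].
  rewrite /Q rmorphB /= !rmorphM /= (psi_var h0) (psi_var (lt4 hi (isT : (3 < 4)%N))).
  rewrite (psi_var (lt4 hi (isT : (1 < 4)%N))) (psi_var (lt4 hi (isT : (2 < 4)%N))).
  by rewrite -!mpolyXD.
have dA : mdeg A = ((wt i 0).+1 + (wt i 3).+1)%N by rewrite mdegD m0 mdeg_mps.
have dB : mdeg B = ((wt i 1).+1 + (wt i 2).+1)%N by rewrite mdegD !mdeg_mps.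
split => H.
  rewrite E -[X in X - _]scale1r; apply: lead_top; first exact: oner_neq0.
  by rewrite msizeN msizeX dA dB !addSn !addnS !ltnS.
rewrite E.
have -> : 'X_[A] - 'X_[B] = (- 1 : K) *: 'X_[B] + 'X_[A] by rewrite scaleN1r addrC.
apply: lead_top; first by rewrite oppr_eq0 oner_neq0.
by rewrite msizeX dA dB !addSn !addnS !ltnS.
Qed.

End Conc.

Lemma not_unit (K : fieldType) (n : nat) (s : seq {mpoly K[n]}) :
  (forall k, (k < size s)%N -> (s`_k).@[fun _ => 0] = 0) -> ~ in_ideal_gen s 1.
Proof.
move=> H [c E]; have := congr1 (meval (fun _ => 0)) E.
rewrite meval1 rmorph_sum big1; first by move/eqP; rewrite oner_eq0.
by move=> k _; rewrite rmorphM /= H // mulr0.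
Qed.

Lemma meval_var (K : fieldType) N j : (var4 K N j).@[fun _ => 0] = 0.
Proof. rewrite /var4; case: (4 * N)%N => [|m]; by rewrite ?meval0 ?mevalXU. Qed.

Definition wt1 (i t : nat) : nat :=
  match i with 0 => nth 0 [:: 10; 6; 6; 0] t | 1 => nth 0 [:: 0; 6; 6; 10] t
  | 2 => nth 0 [:: 8; 7; 7; 8] t | _ => if t == 0 then 1 else 0 end.
Definition SIN (k : nat) : seq nat :=
  match k with 0 => [:: 0] | 1 => [:: 9] | 2 => [:: 10] | 3 => [:: 7]
  | 4 => [:: 1; 2] | 5 => [:: 5; 6] | 6 => [:: 8; 11]
  | k'.+4 => [:: 4 * k'; 4 * k' + 3] end.
Definition ownIN (x : nat) : nat :=
  if x == 0 then 0 else if x == 9 then 1 else if x == 10 then 2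
  else if x == 7 then 3 else (4 + x %/ 4)%N.

Lemma ownIN_S k x : x \in SIN k -> ownIN x = k.
Proof.
case: k => [|[|[|[|[|[|[|k]]]]]]] /=; rewrite ?inE;
  try by [move=> /eqP -> | move=> /orP [/eqP ->|/eqP ->]].
move=> /orP [/eqP ->|/eqP ->]; rewrite /ownIN !ifN_eq; try lia.
Qed.

Section IN.
Variables (K : fieldType) (N : nat).
Hypothesis HN : (3 <= N)%N.
Local Notation n := (4 * N)%N.
Local Notation psi p := (p \mPo lqW K n (Wt wt1)).
Local Notation mps := (mpsi n (Wt wt1)).

Lemma size_IN : size (IN_gens K N) = (4 + N)%N.
Proof. by rewrite /IN_gens size_cat size_map size_iota. Qed.

Lemma leadsIN k : (k < size (IN_gens K N))%N ->
  mlead (psi (IN_gens K N)`_k) = \big[+%MM/0%MM]_(x <- SIN k) mps x /\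
  psi (IN_gens K N)`_k != 0.
Proof.
have N0 : (0 < N)%N by lia.
have N1 : (1 < N)%N by lia.
have N2 : (2 < N)%N by lia.
rewrite size_IN; case: k => [|[|[|[|j]]]] hk.
- have -> : (IN_gens K N)`_0 = \sum_(i < N) var4 K N (4 * i + 0).
    by rewrite /= /ka; apply: eq_bigr => i _; rewrite addn0.
  have [-> ->] := lin_lead K (N:=N) (wt:=wt1) (isT : (0 < 4)%N) (i0 := Ordinal N0)
      (ltac:(by case=> [[|[|[|i]]] hi] //=)).
    by rewrite big_cons big_nil addm0.
- have [-> ->] := lin_lead K (N:=N) (wt:=wt1) (isT : (1 < 4)%N) (i0 := Ordinal N2)
      (ltac:(by case=> [[|[|[|i]]] hi] //=)).
    by rewrite big_cons big_nil addm0.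
- have [-> ->] := lin_lead K (N:=N) (wt:=wt1) (isT : (2 < 4)%N) (i0 := Ordinal N2)
      (ltac:(by case=> [[|[|[|i]]] hi] //=)).
    by rewrite big_cons big_nil addm0.
- have [-> ->] := lin_lead K (N:=N) (wt:=wt1) (isT : (3 < 4)%N) (i0 := Ordinal N1)
      (ltac:(by case=> [[|[|[|i]]] hi] //=)).
    by rewrite big_cons big_nil addm0.
have hj : (j < N)%N by lia.
rewrite /= (nth_map 0) ?size_iota // nth_iota // add0n.
have [QA QB] := Q_lead K wt1 hj.
case: j hj {hk} QA QB => [|[|[|j]]] hj QA QB.
- by have [-> ->] := QB isT; rewrite big_cons big_cons big_nil addm0.
- by have [-> ->] := QB isT; rewrite big_cons big_cons big_nil addm0.
- by have [-> ->] := QA isT; rewrite big_cons big_cons big_nil addm0.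
- by have [-> ->] := QA isT; rewrite big_cons big_cons big_nil addm0.
Qed.

End IN.

Definition wt2 (i t : nat) : nat :=
  match i with 0 => 2 | 1 => nth 0 [:: 3; 0; 0; 3] t
  | 2 => nth 0 [:: 0; 3; 3; 0] t | _ => 0 end.
Definition SIp (k : nat) : seq nat :=
  match k with 0 => [:: 0; 2] | 1 => [:: 4; 7] | 2 => [:: 9; 10] | _ => [:: 1; 3] end.

Section IpN.
Variables (K : fieldType) (N : nat).
Hypothesis HN : (3 <= N)%N.
Local Notation n := (4 * N)%N.
Local Notation psi p := (p \mPo lqW K n (Wt wt2)).
Local Notation mps := (mpsi n (Wt wt2)).

Lemma leadsIp k : (k < size (IpN_gens K N))%N ->
  mlead (psi (IpN_gens K N)`_k) = \big[+%MM/0%MM]_(x <- SIp k) mps x /\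
  psi (IpN_gens K N)`_k != 0.
Proof.
have N0 : (0 < N)%N by lia.
have N1 : (1 < N)%N by lia.
have N2 : (2 < N)%N by lia.
case: k => [|[|[|[|j]]]] hk //.
- have -> : (IpN_gens K N)`_0 = \sum_(i < N) var4 K N (4 * i + 0) * var4 K N (4 * i + 2).
    by rewrite /= /v1 /w1; apply: eq_bigr => i _; rewrite addn0.
  have [-> ->] := quad_lead K (N:=N) (wt:=wt2) (isT : (0 < 4)%N) (isT : (2 < 4)%N)
      (i0 := Ordinal N0) (ltac:(by case=> [[|[|[|i]]] hi] //=)).
  by rewrite big_cons big_cons big_nil addm0.
- have -> : (IpN_gens K N)`_1 = \sum_(i < N) var4 K N (4 * i + 0) * var4 K N (4 * i + 3).
    by rewrite /= /v1 /w2; apply: eq_bigr => i _; rewrite addn0.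
  have [-> ->] := quad_lead K (N:=N) (wt:=wt2) (isT : (0 < 4)%N) (isT : (3 < 4)%N)
      (i0 := Ordinal N1) (ltac:(by case=> [[|[|[|i]]] hi] //=)).
  by rewrite big_cons big_cons big_nil addm0.
- have [-> ->] := quad_lead K (N:=N) (wt:=wt2) (isT : (1 < 4)%N) (isT : (2 < 4)%N)
      (i0 := Ordinal N2) (ltac:(by case=> [[|[|[|i]]] hi] //=)).
  by rewrite big_cons big_cons big_nil addm0.
- have [-> ->] := quad_lead K (N:=N) (wt:=wt2) (isT : (1 < 4)%N) (isT : (3 < 4)%N)
      (i0 := Ordinal N0) (ltac:(by case=> [[|[|[|i]]] hi] //=)).
  by rewrite big_cons big_cons big_nil addm0.
Qed.

End IpN.

Theorem main_gen (K : fieldType) (N : nat) : (3 <= N)%N ->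
  regular_seq (IN_gens K N) /\ regular_seq (IpN_gens K N).
Proof.
move=> HN; split.
- apply: (regular_from (lq := lqW K (4 * N) (Wt wt1)) (le := leW K (4 * N))).
  + exact: lqle.
  + by move=> k hk; case: (leadsIN HN hk).
  + move=> k1 k2 h1 h2 k12 v.
    rewrite (leadsIN HN h1).1 (leadsIN HN h2).1; apply: cop_from.
    apply/hasPn => x x1; apply/negP => x2.
    by move: k12; rewrite -(ownIN_S x1) -(ownIN_S x2) eqxx.
  + apply: not_unit => k; rewrite size_IN; case: k => [|[|[|[|j]]]] hk.
    * by rewrite /= rmorph_sum big1 // => i _; exact: meval_var.
    * by rewrite /= rmorph_sum big1 // => i _; exact: meval_var.
    * by rewrite /= rmorph_sum big1 // => i _; exact: meval_var.
    * by rewrite /= rmorph_sum big1 // => i _; exact: meval_var.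
    rewrite /= (nth_map 0%N); last by rewrite size_iota; lia.
    by rewrite rmorphB !rmorphM /= !meval_var mul0r subrr.
- apply: (regular_from (lq := lqW K (4 * N) (Wt wt2)) (le := leW K (4 * N))).
  + exact: lqle.
  + by move=> k hk; case: (leadsIp HN hk).
  + move=> k1 k2 h1 h2 k12 v.
    rewrite (leadsIp HN h1).1 (leadsIp HN h2).1; apply: cop_from.
    by case: k1 h1 k12 => [|[|[|[|k1]]]] //; case: k2 h2 => [|[|[|[|k2]]]].
  + apply: not_unit => k; case: k => [|[|[|[|j]]]] hk //.
    * rewrite /= rmorph_sum big1 // => i _; rewrite rmorphM /=.
      by apply/eqP; rewrite mulf_eq0; apply/orP; left; apply/eqP; exact: meval_var.
    * rewrite /= rmorph_sum big1 // => i _; rewrite rmorphM /=.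
      by apply/eqP; rewrite mulf_eq0; apply/orP; left; apply/eqP; exact: meval_var.
    * rewrite /= rmorph_sum big1 // => i _; rewrite rmorphM /=.
      by apply/eqP; rewrite mulf_eq0; apply/orP; left; apply/eqP; exact: meval_var.
    * rewrite /= rmorph_sum big1 // => i _; rewrite rmorphM /=.
      by apply/eqP; rewrite mulf_eq0; apply/orP; left; apply/eqP; exact: meval_var.
Qed.

Theorem mainTheorem9 (R : realType) (N : nat) : (3 <= N)%N ->
  regular_seq (IN_gens (complex R) N) /\ regular_seq (IpN_gens (complex R) N).
Proof. exact: (@main_gen (complex R) N). Qed.
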